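(* Let $(X,\tau)$ be an extended locally convex space and let $\tau_F$ be its finest locally convex topology. Then $(X,\tau)$ is Hausdorff if and only if $(X,\tau_F)$ is Hausdorff.
   Context: An extended seminorm on a vector space $X$ over $\mathbb{R}$ or $\mathbb{C}$ is a map $\rho:X\to[0,\infty]$ with $\rho(\alpha x)=|\alpha|\rho(x)$ and $\rho(x+y)\le\rho(x)+\rho(y)$. An extended locally convex space $(X,\tau)$ is a vector space with the topology induced by a family $\{\rho_i\}$ of extended seminorms (neighborhood base at $x_0$: $\{x:\max_{i\in J}\rho_i(x-x_0)<\varepsilon\}$, $J$ finite, $\varepsilon>0$). A locally convex topology is one induced in this way by finite-valued seminorms. The finest locally convex topology $\tau_F$ of $(X,\tau)$ is the locally convex topology on $X$ with $\tau_F\subseteq\tau$ such that every locally convex topology $\sigma\subseteq\tau$ on $X$ satisfies $\sigma\subseteq\tau_F$. *)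

(* Defs.v *)
From mathcomp Require Import all_boot all_order all_algebra.
From mathcomp Require Import classical_sets cardinality reals constructive_ereal ereal.
From mathcomp Require Import complex.
Import GRing.Theory Num.Theory.

Set Implicit Arguments.
Unset Strict Implicit.
Unset Printing Implicit Defensive.

Local Open Scope classical_set_scope.
Local Open Scope ring_scope.
Local Open Scope ereal_scope.

(* The real numbers are an arbitrary [R : realType]; the scalar field [K] is
   either R or R[i]; [absK : K -> R] is the absolute value of scalars. *)

Section ExtendedLCS.
Variables (R : realType) (K : numFieldType) (absK : K -> R) (X : lmodType K).

Definition ext_seminorm (rho : X -> \bar R) : Prop :=
  [/\ forall x, 0 <= rho x,
      forall (a : K) x, rho (a *: x) = (absK a)%:E * rho x &
      forall x y, rho (x + y)%R <= rho x + rho y].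

Definition seminorm (rho : X -> \bar R) : Prop :=
  ext_seminorm rho /\ forall x, rho x < +oo.

Definition induced_topology (I : Type) (rho : I -> X -> \bar R) : set (set X) :=
  [set U | forall x0, U x0 ->
     exists (J : set I) (eps : R), [/\ finite_set J, (0 < eps)%R &
       [set x | forall i, J i -> rho i (x - x0)%R < eps%:E] `<=` U]].

Definition ext_locally_convex (tau : set (set X)) : Prop :=
  exists (I : Type) (rho : I -> X -> \bar R),
    (forall i, ext_seminorm (rho i)) /\ tau = induced_topology rho.

Definition locally_convex (sigma : set (set X)) : Prop :=
  exists (I : Type) (rho : I -> X -> \bar R),
    (forall i, seminorm (rho i)) /\ sigma = induced_topology rho.

Definition finest_lc_topology (tau tauF : set (set X)) : Prop :=
  [/\ locally_convex tauF, tauF `<=` tau &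
      forall sigma, locally_convex sigma -> sigma `<=` tau -> sigma `<=` tauF].

Definition hausdorff (tau : set (set X)) : Prop :=
  forall x y : X, x <> y ->
    exists U V, [/\ tau U, tau V, U x, V y & U `&` V = set0].

End ExtendedLCS.

Definition absC (R : realType) (z : R[i]) : R := ComplexField.Normc.normc z.

(* Main.v *)
Require Import Defs.
From mathcomp Require Import all_boot all_order all_algebra.
From mathcomp Require Import classical_sets cardinality reals constructive_ereal ereal.
From mathcomp Require Import complex.
From mathcomp Require Import boolp.
From mathcomp Require Import ring lra.
Import GRing.Theory Num.Theory Order.TTheory.
Set Implicit Arguments.
Unset Strict Implicit.
Unset Printing Implicit Defensive.
Local Open Scope classical_set_scope.
Local Open Scope ring_scope.
Section Top.
Variables (R : realType) (K : numFieldType) (absK : K -> R) (X : lmodType K).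
Hypothesis habs1 : absK (-1) = 1.
Hypothesis habs0 : absK 0 = 0.

Definition SEPH := forall rho : X -> \bar R, ext_seminorm absK rho ->
  forall v, rho v <> 0%E -> exists q : X -> R,
   [/\ forall x, 0 <= q x, forall a x, q (a *: x) = absK a * q x,
       forall x y, q (x+y) <= q x + q y & 0 < q v] /\
   exists C : R, 0 < C /\ forall x, ((q x)%:E <= C%:E * rho x)%E.

Lemma qsem (q : X -> R) : (forall x, 0 <= q x) -> (forall a x, q (a *: x) = absK a * q x) ->
  (forall x y, q (x+y) <= q x + q y) -> seminorm absK (fun x => (q x)%:E).
Proof.
move=> q0 qs qd; split; last by move=> x; exact: ltry.
split => [x|a x|x y]; first by rewrite lee_fin.
  by rewrite qs EFinM.
by rewrite -EFinD lee_fin.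
Qed.

Lemma qneg (q : X -> R) : (forall a x, q (a *: x) = absK a * q x) -> forall x, q (- x) = q x.
Proof. by move=> qs x; rewrite -scaleN1r qs habs1 mul1r. Qed.

Lemma top_main (SEP : SEPH) (tau tauF : set (set X)) : ext_locally_convex absK tau ->
  finest_lc_topology absK tau tauF -> (hausdorff tau <-> hausdorff tauF).
Proof.
move=> [I [rho [rhoS ->]]] [_ Fsub Fmax]; split; last first.
  move=> hF x y /hF [U [V [UF VF Ux Vy UV]]].
  by exists U, V; split => //; apply: Fsub.
move=> hT x y xy.
have [i rx] : exists i, rho i (x - y) <> 0%E.
  apply: contrapT => /forallNP H.
  have [U [V [UT VT Ux Vy UV]]] := hT x y xy.
  have [J [eps [_ eps0 sub]]] := UT x Ux.
  have Uy : U y.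
    apply: sub => j _ /=.
    have := (rhoS j).
    case => _ hs _.
    rewrite -opprB -scaleN1r hs habs1.
    have /contrapT -> := H j.
    by rewrite mule0 lte_fin.
  have : (U `&` V) y by [].
  by rewrite UV.
have [q [[q0 qs qd qv] [C [C0 qC]]]] := SEP _ (rhoS i) _ rx.
pose sigma := induced_topology (fun _ : unit => fun z => (q z)%:E).
have lcs : locally_convex absK sigma.
  by exists unit, (fun _ : unit => fun z => (q z)%:E); split => // _; apply: qsem.
have sT : sigma `<=` induced_topology rho.
  move=> U sU x0 Ux0.
  have [J [eps [_ eps0 sub]]] := sU x0 Ux0.
  exists [set i], (eps / C); split; [exact: finite_set1 | by rewrite divr_gt0 |].
  move=> z /= hz; apply: sub => j _ /=.
  have := hz i erefl.
  have := qC (z - x0).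
  have := (rhoS i); case => r0 _ _.
  have := r0 (z - x0).
  case: (rho i (z - x0)) => [r| |] //= _ h1 h2.
  rewrite lte_fin; rewrite lte_fin in h2; rewrite -EFinM lee_fin in h1.
  apply: (le_lt_trans h1).
  by rewrite -ltr_pdivlMl // mulrC.
have sF := Fmax _ lcs sT.
pose d := q (x - y).
exists [set z | q (z - x) < d / 2], [set z | q (z - y) < d / 2].
split.
- apply: sF => x0 /= h.
  exists [set tt], (d/2 - q (x0 - x)); split; [exact: finite_set1 | by rewrite subr_gt0 |].
  move=> z /(_ tt erefl) /=; rewrite lte_fin => hz.
  have := qd (z - x0) (x0 - x).
  rewrite addrA subrK => h2; lra.
- apply: sF => x0 /= h.
  exists [set tt], (d/2 - q (x0 - y)); split; [exact: finite_set1 | by rewrite subr_gt0 |].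
  move=> z /(_ tt erefl) /=; rewrite lte_fin => hz.
  have := qd (z - x0) (x0 - y).
  rewrite addrA subrK => h2; lra.
- by rewrite /= subrr -(scale0r (0:X)) qs habs0 mul0r divr_gt0.
- by rewrite /= subrr -(scale0r (0:X)) qs habs0 mul0r divr_gt0.
apply/seteqP; split => // z [/= h1 h2].
have := qd (x - z) (z - y).
rewrite addrA subrK -/d -opprB qneg // => h3.
have h4 := ltrD h1 h2; rewrite -splitr in h4.
by have := le_lt_trans h3 h4; rewrite ltxx.
Qed.
End Top.
Section HBext.
Variables (R : realType) (X : zmodType) (s : R -> X -> X).
Hypothesis sDr : forall t x y, s t (x + y) = s t x + s t y.
Hypothesis sDl : forall t u x, s (t + u) x = s t x + s u x.
Hypothesis sM : forall t u x, s t (s u x) = s (t * u) x.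
Hypothesis s1 : forall x, s 1 x = x.
Variable rho : X -> \bar R.
Hypothesis r0 : forall x, (0 <= rho x)%E.
Hypothesis rs : forall t x, rho (s t x) = (`|t|%:E * rho x)%E.
Hypothesis rd : forall x y, (rho (x + y) <= rho x + rho y)%E.

Lemma s0 x : s 0 x = 0.
Proof. by apply: (@addrI _ (s 0 x)); rewrite -sDl !addr0. Qed.

Lemma sN1 x : s (-1) x = - x.
Proof. by apply: (@addrI _ x); rewrite -{1}(s1 x) -sDl !subrr s0. Qed.

Lemma rho0 : rho 0 = 0%E.
Proof. by rewrite -(s0 0) rs normr0 mul0e. Qed.

Lemma rhoN x : rho (- x) = rho x.
Proof. by rewrite -sN1 rs normrN normr1 mul1e. Qed.

Definition good (G : set (X * R)) :=
 [/\ forall p q, G p -> G q -> G (p.1 + q.1, p.2 + q.2),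
     forall t p, G p -> G (s t p.1, t * p.2) &
     forall p, G p -> ((p.2)%:E <= rho p.1)%E].

Section Step.
Variables (A : set (X * R)) (w : X).
Hypothesis gA : good A.
Hypothesis An : A !=set0.
Hypothesis wA : forall a, ~ A (w, a).

Definition Lset := [set r | exists d a e, [/\ A (d, a), rho (d - w) = e%:E & r = a - e]].
Definition cval := sup Lset.
Local Notation L := Lset.
Local Notation c := cval.

Lemma A00 : A (0, 0).
Proof.
case: gA => _ gs _; case: An => [[d a]] /(gs 0) /=.
by rewrite s0 mul0r.
Qed.

Lemma AN d a : A (d, a) -> A (- d, - a).
Proof. by case: gA => _ gs _ /(gs (-1)) /=; rewrite sN1 mulN1r. Qed.

Lemma cross d a d' a' : A (d, a) -> A (d', a') ->
  ((a + a')%:E <= rho (d - w) + rho (d' + w))%E.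
Proof.
case: gA => ga _ gd h h'; have := gd _ (ga _ _ h h') => /= /le_trans; apply.
have e : (d - w) + (d' + w) = d + d' by rewrite addrACA addNr addr0.
by rewrite -e; apply: rd.
Qed.

Lemma L1 d a : A (d, a) -> ((a - c)%:E <= rho (d - w))%E.
Proof.
move=> h; case E : (rho (d - w)) => [e| |]; last 2 first.
- exact: leey.
- by have := r0 (d - w); rewrite E.
have hub : ubound L (e + a).
  move=> _ [d1 [a1 [e1 [h1 E1 ->]]]].
  have := cross h1 (AN h).
  have -> : - d + w = - (d - w) by rewrite opprB addrC.
  rewrite rhoN E1 E -EFinD lee_fin => H; lra.
have : a - e <= c by apply: ub_le_sup; [exists (e + a) | exists d, a, e].
rewrite lee_fin => H; lra.
Qed.

Lemma U1 d a : A (d, a) -> ((a + c)%:E <= rho (d + w))%E.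
Proof.
move=> h; case E : (rho (d + w)) => [e| |]; last 2 first.
- exact: leey.
- by have := r0 (d + w); rewrite E.
have hub : ubound L (e - a).
  move=> _ [d1 [a1 [e1 [h1 E1 ->]]]].
  have := cross h1 h.
  rewrite E1 E -EFinD lee_fin => H; lra.
have : c <= e - a.
  apply: ge_sup => //; exists (- a - e), (- d), (- a), e; split => //.
  - exact: AN.
  - by rewrite -opprD rhoN.
rewrite lee_fin => H; lra.
Qed.

End Step.


Lemma hb_ext v c0 : 0 <= c0 -> (c0%:E <= rho v)%E ->
  exists f : X -> R, [/\ forall x y, f (x + y) = f x + f y,
    forall t x, f (s t x) = t * f x, forall x, ((f x)%:E <= rho x)%E & f v = c0].
Proof.
move=> c00 cv.
pose G0 := [set p : X * R | exists t, p = (s t v, t * c0)].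
have gG0 : good G0.
  split.
  - by move=> _ _ [t ->] [u ->] /=; exists (t + u); rewrite sDl mulrDl.
  - by move=> u _ [t ->] /=; exists (u * t); rewrite sM mulrA.
  - move=> _ [t ->] /=; rewrite rs.
    apply: (@le_trans _ _ (`|t|%:E * c0%:E)%E).
      rewrite -EFinM lee_fin; apply: ler_wpM2r => //; exact: ler_norm.
    by apply: lee_wpmul2l.
pose P := fun G => good G /\ (G !=set0 -> G0 `<=` G).
have [A [[gA A0] Amax]] : exists A, P A /\ forall B, A `<` B -> ~ P B.
  apply: Zorn_bigcup => F FP Ftot; split.
  - split.
    + move=> p q [A FA Ap] [B FB Bq].
      have [AB|BA] := Ftot _ _ FA FB.
      * exists B => //; case: (FP _ FB) => [[ga _ _] _]; apply: ga => //; exact: AB.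
      * exists A => //; case: (FP _ FA) => [[ga _ _] _]; apply: ga => //; exact: BA.
    + move=> t p [A FA Ap]; exists A => //; case: (FP _ FA) => [[_ gs _] _]; exact: gs.
    + move=> p [A FA Ap]; case: (FP _ FA) => [[_ _ gd] _]; exact: gd.
  - move=> [p [A FA Ap]] q G0q; exists A => //; case: (FP _ FA) => [_ h]; apply: h => //; by exists p.
have An : A !=set0.
  apply: contrapT => nA; apply: (Amax G0); last first.
    by split; [exact: gG0 | move=> _ ?].
  split; first by move=> p Ap; exfalso; apply: nA; exists p.
  move=> e; have : G0 (v, c0) by exists 1; rewrite s1 mul1r.
  by move/e => Av; apply: nA; exists (v, c0).
have G0A := A0 An.
have full : forall x, exists a, A (x, a).
  move=> w; apply: contrapT => /forallNP wA.
  pose B := [set p | exists d a t, A (d, a) /\ p = (d + s t w, a + t * cval A w)].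
  apply: (Amax B).
  - split.
    + by move=> [d a] Ada; exists d, a, 0; split => //; rewrite s0 addr0 mul0r addr0.
    + move=> BA; apply: (wA (cval A w)); apply: BA; exists 0, 0, 1; split.
        exact: A00.
      by rewrite s1 add0r mul1r add0r.
  - split; last first.
      move=> _ [d a] G0p; exists d, a, 0; split; first exact: G0A.
      by rewrite s0 addr0 mul0r addr0.
    split.
    + move=> _ _ [d [a [t [Ad ->]]]] [d' [a' [t' [Ad' ->]]]] /=.
      exists (d + d'), (a + a'), (t + t'); split; first by case: gA => ga _ _; exact: (ga _ _ Ad Ad').
      by rewrite sDl mulrDl; congr pair; rewrite addrACA.
    + move=> u _ [d [a [t [Ad ->]]]] /=.
      exists (s u d), (u * a), (u * t); split; first by case: gA => _ gs _; exact: (gs u _ Ad).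
      by rewrite sDr sM mulrDr mulrA.
    + move=> _ [d [a [t [Ad ->]]]] /=.
      case: (gA) => _ gs gd.
      have [t0|t0|->] := ltgtP t 0; last first.
      * by rewrite s0 addr0 mul0r addr0; exact: (gd _ Ad).
      * have hA : A (s t^-1 d, t^-1 * a) by exact: (gs _ _ Ad).
        have := U1 w gA hA.
        have -> : d + s t w = s t (s t^-1 d + w) by rewrite sDr sM mulfV ?gt_eqF // s1.
        have -> : a + t * cval A w = t * (t^-1 * a + cval A w).
          by rewrite mulrDr mulrA mulfV ?gt_eqF // mul1r.
        rewrite rs gtr0_norm // EFinM => h.
        by apply: lee_wpmul2l => //; rewrite lee_fin ltW.
      * have hA : A (s (- t)^-1 d, (- t)^-1 * a) by exact: (gs _ _ Ad).
        have := L1 w gA hA.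
        have -> : d + s t w = s (- t) (s (- t)^-1 d - w).
          by rewrite -sN1 sDr !sM mulfV ?lt0r_neq0 ?oppr_gt0 // s1 mulrN1 opprK.
        have -> : a + t * cval A w = (- t) * ((- t)^-1 * a - cval A w).
          by rewrite mulrBr mulrA mulfV ?lt0r_neq0 ?oppr_gt0 // mul1r mulNr opprK.
        rewrite rs normrN ltr0_norm // EFinM => h.
        by apply: lee_wpmul2l => //; rewrite lee_fin oppr_ge0 ltW.
pose f x := projT1 (cid (full x)).
have fP x : A (x, f x) := projT2 (cid (full x)).
case: (gA) => ga gs gd.
have uniq x a b : A (x, a) -> A (x, b) -> a = b.
  move=> ha hb.
  have h1 := gd _ (ga _ _ ha (AN gA hb)).
  have h2 := gd _ (ga _ _ hb (AN gA ha)).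
  rewrite /= subrr rho0 lee_fin in h1 h2.
  apply/eqP; rewrite eq_le -subr_le0 h1 /=.
  by rewrite -subr_le0.
exists f; split.
- by move=> x y; apply: uniq (fP (x + y)) (ga _ _ (fP x) (fP y)).
- by move=> t x; apply: uniq (fP (s t x)) (gs t _ (fP x)).
- by move=> x; exact: (gd _ (fP x)).
- apply: uniq (fP v) (G0A (v, c0) _); by exists 1; rewrite s1 mul1r.
Qed.
End HBext.
Lemma absle (R : realType) (a : R) (e : \bar R) : (a%:E <= e)%E -> ((- a)%:E <= e)%E -> (`|a|%:E <= e)%E.
Proof.
case: e => [r| |] h1 h2.
- by rewrite lee_fin in h1 h2 *; apply/ler_normlP; split.
- exact: leey.
- by rewrite leeNy_eq in h1.
Qed.

Lemma c0_exists (R : realType) (e : \bar R) : (0 <= e)%E -> e <> 0%E ->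
  exists c0 : R, [/\ 0 < c0 & (c0%:E <= e)%E].
Proof.
case: e => [r| |] //= h1 h2.
- exists r; split => //; rewrite lt_def; apply/andP; split; first by apply/eqP => e; apply: h2; rewrite e.
  by rewrite -lee_fin.
- by exists 1; split => //; exact: leey.
Qed.

Lemma SEP_real (R : realType) (X : lmodType R) : SEPH (@Num.norm R R) X.
Proof.
move=> rho [r0 rs rd] v rv.
have [c0 [c00 c0v]] := c0_exists (r0 v) rv.
have [f [fD fs fd fv]] := hb_ext (s := fun t (x : X) => t *: x) (@scalerDr _ _) (fun t u x => scalerDl x t u)
  (@scalerA _ _) (@scale1r _ _) r0 rs rd (ltW c00) c0v.
exists (fun x => `|f x|); split; first split.
- by move=> x.
- by move=> a x; rewrite fs normrM.
- by move=> x y; rewrite fD ler_normD.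
- by rewrite fv gtr0_norm.
exists 1; split => // x; rewrite mul1e; apply: absle => //.
have := fd (- x); rewrite -scaleN1r fs mulN1r scaleN1r.
by have := rs (-1) x; rewrite normrN normr1 mul1e scaleN1r => ->.
Qed.
Section Cx.
Variables (R : realType) (X : lmodType R[i]).
Local Notation s := (fun (t : R) (x : X) => (t%:C)%C *: x).

Lemma rCD (t u : R) : ((t + u)%:C = t%:C + u%:C)%C.
Proof. by apply/eqP; rewrite eq_complex /= addr0 !eqxx. Qed.
Lemma rCM (t u : R) : ((t * u)%:C = t%:C * u%:C)%C.
Proof. by apply/eqP; rewrite eq_complex /= !mulr0 !mul0r subr0 addr0 !eqxx. Qed.

Lemma decomp (a1 a2 : R) (x : X) : (a1 +i* a2)%C *: x = s a1 x + s a2 ('i%C *: x).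
Proof.
rewrite /= scalerA -scalerDl; congr (_ *: _).
apply/eqP; rewrite eq_complex /=; apply/andP; split; apply/eqP; ring.
Qed.

Lemma imul (a1 a2 : R) : ('i * (a1 +i* a2) = (- a2)%:C + a1%:C * 'i)%C.
Proof.
apply/eqP; rewrite eq_complex /=; apply/andP; split; apply/eqP; ring.
Qed.

Lemma absC_real (t : R) : absC (t%:C)%C = `|t|.
Proof. by rewrite /absC /= expr0n /= addr0 sqrtr_sqr. Qed.
Lemma absC_i : absC ('i%C : R[i]) = 1.
Proof. by rewrite /absC /= expr0n /= add0r expr1n sqrtr1. Qed.

Lemma absC_N1 : absC (-1 : R[i]) = 1.
Proof. by rewrite /absC /= oppr0 expr0n /= addr0 sqrrN expr1n sqrtr1. Qed.
Lemma absC_0 : absC (0 : R[i]) = 0.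
Proof. by rewrite /absC /= expr0n /= addr0 sqrtr0. Qed.
Lemma rC1 : ((1 : R)%:C = 1)%C.
Proof. by []. Qed.

Lemma mink (a b c d : R) : Num.sqrt ((a + c) ^+ 2 + (b + d) ^+ 2) <=
  Num.sqrt (a ^+ 2 + b ^+ 2) + Num.sqrt (c ^+ 2 + d ^+ 2).
Proof.
have hA : 0 <= a ^+ 2 + b ^+ 2 by rewrite addr_ge0 ?sqr_ge0.
have hB : 0 <= c ^+ 2 + d ^+ 2 by rewrite addr_ge0 ?sqr_ge0.
have hS : 0 <= Num.sqrt (a ^+ 2 + b ^+ 2) + Num.sqrt (c ^+ 2 + d ^+ 2).
  by rewrite addr_ge0 ?sqrtr_ge0.
rewrite -(ger0_norm hS) -sqrtr_sqr ler_sqrt ?sqr_ge0 //.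
have h1 : a * c + b * d <= Num.sqrt (a ^+ 2 + b ^+ 2) * Num.sqrt (c ^+ 2 + d ^+ 2).
  rewrite -sqrtrM //; apply: (le_trans (ler_norm _)).
  rewrite -sqrtr_sqr ler_sqrt; last by rewrite mulr_ge0.
  have -> : (a ^+ 2 + b ^+ 2) * (c ^+ 2 + d ^+ 2) = (a * c + b * d) ^+ 2 + (a * d - b * c) ^+ 2 by ring.
  by rewrite lerDl sqr_ge0.
have e1 := sqr_sqrtr hA; have e2 := sqr_sqrtr hB.
move: h1 e1 e2; set u := Num.sqrt _; set w := Num.sqrt _ => h1 e1 e2.
have -> : (u + w) ^+ 2 = u ^+ 2 + w ^+ 2 + 2 * (u * w) by ring.
rewrite e1 e2.
have -> : (a + c) ^+ 2 + (b + d) ^+ 2 = a ^+ 2 + b ^+ 2 + (c ^+ 2 + d ^+ 2) + 2 * (a * c + b * d) by ring.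
by rewrite lerD2l ler_pM2l.
Qed.

Lemma SEP_cx : SEPH (@absC R) X.
Proof.
move=> rho [r0 rs rd] v rv.
have [c0 [c00 c0v]] := c0_exists (r0 v) rv.
have rs' : forall (t : R) (x : X), rho (s t x) = (`|t|%:E * rho x)%E.
  by move=> t x /=; rewrite rs absC_real.
have sDl' : forall (t u : R) (x : X), s (t + u) x = s t x + s u x.
  by move=> t u x /=; rewrite rCD scalerDl.
have sM' : forall (t u : R) (x : X), s t (s u x) = s (t * u) x.
  by move=> t u x /=; rewrite scalerA rCM.
have s1' : forall x : X, s 1 x = x by move=> x /=; rewrite rC1 scale1r.
have [f [fD fs fd fv]] := hb_ext (s := s) (fun t => @scalerDr _ _ _) sDl' sM' s1' r0 rs' rd (ltW c00) c0v.
have f0 : f 0 = 0 by apply: (@addrI _ (f 0)); rewrite -fD !addr0.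
have fN x : f (- x) = - f x.
  by apply/eqP; rewrite -addr_eq0 -fD addNr f0.
have rN x : rho (- x) = rho x by rewrite -scaleN1r rs absC_N1 mul1e.
have fabs x : ((`|f x|)%:E <= rho x)%E.
  by apply: absle; [exact: fd | rewrite -fN -rN; exact: fd].
pose q x := Num.sqrt (f x ^+ 2 + f ('i%C *: x) ^+ 2).
exists q; split; first split.
- by move=> x; exact: sqrtr_ge0.
- move=> [a1 a2] x; rewrite /q.
  have -> : f ('i%C *: ((a1 +i* a2)%C *: x)) = - a2 * f x + a1 * f ('i%C *: x).
    by rewrite scalerA imul scalerDl -scalerA fD !fs.
  rewrite decomp fD !fs.
  have -> : (a1 * f x + a2 * f ('i%C *: x)) ^+ 2 + (- a2 * f x + a1 * f ('i%C *: x)) ^+ 2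
    = (a1 ^+ 2 + a2 ^+ 2) * (f x ^+ 2 + f ('i%C *: x) ^+ 2) by ring.
  by rewrite sqrtrM // addr_ge0 ?sqr_ge0.
- by move=> x y; rewrite /q scalerDr !fD; apply: mink.
- rewrite /q fv; apply: (lt_le_trans c00).
  rewrite -{1}(ger0_norm (ltW c00)) -sqrtr_sqr ler_sqrt ?lerDl ?sqr_ge0 //.
  by rewrite addr_ge0 ?sqr_ge0.
exists 2; split => // x.
have hq : q x <= `|f x| + `|f ('i%C *: x)|.
  rewrite /q -(ger0_norm (addr_ge0 (normr_ge0 (f x)) (normr_ge0 (f ('i%C *: x))))).
  rewrite -sqrtr_sqr ler_sqrt ?sqr_ge0 //.
  rewrite -(real_normK (num_real (f x))) -(real_normK (num_real (f ('i%C *: x)))).  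
  have h1 := normr_ge0 (f x); have h2 := normr_ge0 (f ('i%C *: x)).
  move: h1 h2; set u := `|f x|; set w := `|_| => h1 h2.
  have -> : (u + w) ^+ 2 = u ^+ 2 + w ^+ 2 + 2 * (u * w) by ring.
  by rewrite lerDl mulr_ge0 // mulr_ge0.
have h1 := fabs x; have h2 := fabs ('i%C *: x).
rewrite rs absC_i mul1e in h2.
move: h1 h2; case E : (rho x) => [r| |] h1 h2.
- rewrite lee_fin in h1 h2; rewrite -EFinM lee_fin.
  apply: (le_trans hq); rewrite mulr_natl mulr2n; exact: lerD.
- by rewrite gt0_muley ?lte_fin // leey.
- by have := r0 x; rewrite E.
Qed.

End Cx.

Theorem proposition3p9 (R : realType) :
  (forall (X : lmodType R) (tau tauF : set (set X)),
     ext_locally_convex (@Num.norm R R) tau ->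
     finest_lc_topology (@Num.norm R R) tau tauF ->
     (hausdorff tau <-> hausdorff tauF)) /\
  (forall (X : lmodType R[i]) (tau tauF : set (set X)),
     ext_locally_convex (@absC R) tau ->
     finest_lc_topology (@absC R) tau tauF ->
     (hausdorff tau <-> hausdorff tauF)).
Proof.
split => X tau tauF.
- apply: top_main; [by rewrite normrN normr1 | by rewrite normr0 | exact: SEP_real].
- apply: top_main; [exact: absC_N1 | exact: absC_0 | exact: SEP_cx].
Qed.
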